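(* $$\sigma(3,3)+3\sigma(2,4)=15\lambda(6)-8\lambda(3)^2.$$
   Context: For integers $t\geq 1$, $n\geq 1$ let $S_n^{(t)}=\sum_{k=1}^{n}\frac{1}{(2k-1)^t}$, and for integers $s\geq 2$, $t\geq 1$ let $\sigma(s,t)=\sum_{n\geq 1}\frac{S_n^{(t)}}{n^s}$. For real $s>1$, $\lambda(s)=\sum_{n\geq 1}\frac{1}{(2n-1)^s}$. *)

(* Defs.v *)
From Stdlib Require Import Reals.
From Coquelicot Require Import Coquelicot.
Open Scope R_scope.

Definition S_odd (t n : nat) : R :=
  sum_n_m (fun k => / (2 * INR k - 1) ^ t) 1 n.

Definition sigma_st (s t : nat) : R :=
  Series (fun m => S_odd t (S m) / (INR (S m)) ^ s).

Definition lambda_odd (s : nat) : R :=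
  Series (fun m => / (2 * INR (S m) - 1) ^ s).

(* Main.v *)
Require Import Defs.
From Stdlib Require Import Reals Lra Lia.
From Coquelicot Require Import Coquelicot.
Open Scope R_scope.

Fixpoint fs (f : nat -> R) (n : nat) : R :=
  match n with O => 0 | S n => fs f n + f n end.

Lemma fs_ext f g n : (forall k, (k < n)%nat -> f k = g k) -> fs f n = fs g n.
Proof.
  induction n; intros H; simpl; auto.
  rewrite IHn by (intros; apply H; lia). rewrite H by lia. auto.
Qed.

Lemma fs_plus f g n : fs (fun k => f k + g k) n = fs f n + fs g n.
Proof. induction n; simpl; [lra|rewrite IHn; lra]. Qed.

Lemma fs_scal c f n : fs (fun k => c * f k) n = c * fs f n.
Proof. induction n; simpl; [lra|rewrite IHn; lra]. Qed.

Lemma fs_le_lt f g n : (forall k, (k < n)%nat -> f k <= g k) -> fs f n <= fs g n.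
Proof. intros H; induction n; simpl; [lra|]. assert (f n <= g n) by (apply H; lia).
  assert (fs f n <= fs g n) by (apply IHn; intros; apply H; lia). lra. Qed.

Lemma fs_nonneg f n : (forall k, 0 <= f k) -> 0 <= fs f n.
Proof. intros H; induction n; simpl; [lra| specialize (H n); lra]. Qed.

Lemma fs_le f g n : (forall k, f k <= g k) -> fs f n <= fs g n.
Proof. intros H; induction n; simpl; [lra| specialize (H n); lra]. Qed.

Lemma fs_mono f n m : (forall k, 0 <= f k) -> (n <= m)%nat -> fs f n <= fs f m.
Proof.
  intros H Hnm; induction Hnm; [lra|simpl; specialize (H m); lra].
Qed.

Lemma fs_front g n : fs g (S n) = g O + fs (fun j => g (S j)) n.
Proof. induction n; simpl in *; [lra|]. rewrite IHn; lra. Qed.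

Lemma fs_rev f n : fs f n = fs (fun j => f (n - S j)%nat) n.
Proof.
  induction n; [reflexivity|].
  rewrite (fs_front (fun j => f (S n - S j)%nat)).
  replace (S n - 1)%nat with n by lia.
  simpl fs. rewrite IHn. simpl. lra.
Qed.

Lemma fs_add f n m : fs f (n + m) = fs f n + fs (fun j => f (n + j)%nat) m.
Proof.
  induction m; simpl. rewrite Nat.add_0_r; lra.
  rewrite Nat.add_succ_r; simpl; rewrite IHm; lra.
Qed.

Lemma fs_sum_n f n : fs f (S n) = sum_n f n.
Proof.
  induction n. simpl; rewrite sum_O; lra.
  rewrite sum_Sn; simpl fs; simpl in IHn; rewrite <- IHn. reflexivity.
Qed.

Lemma fs_sum_f_R0 f n : fs f (S n) = sum_f_R0 f n.
Proof. induction n; simpl in *; [lra|]. rewrite IHn; lra. Qed.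

Lemma is_series_fs a l : is_series a l <-> is_lim_seq (fs a) l.
Proof.
  split; intro H.
  - apply is_lim_seq_incr_1. eapply is_lim_seq_ext; [|exact H].
    intros n; rewrite fs_sum_n; reflexivity.
  - apply is_lim_seq_incr_1 in H. eapply is_lim_seq_ext in H; [exact H|].
    intros n; simpl; rewrite <- fs_sum_n; reflexivity.
Qed.

Lemma ex_series_bounded a M : (forall n, 0 <= a n) -> (forall n, fs a n <= M) -> ex_series a.
Proof.
  intros H0 HM.
  assert (E : ex_finite_lim_seq (fs a)).
  { apply ex_finite_lim_seq_incr with M; auto. intros n; simpl; specialize (H0 n); lra. }
  destruct E as [l Hl]. exists l. apply is_series_fs. exact Hl.
Qed.

Lemma is_series_tail a l n : is_series a l -> is_series (fun k => a (n + k)%nat) (l - fs a n).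
Proof.
  intros H. apply is_series_fs in H. apply is_series_fs.
  apply (is_lim_seq_incr_n _ n) in H.
  eapply is_lim_seq_ext; [|apply (is_lim_seq_minus' _ _ _ _ H (is_lim_seq_const (fs a n)))].
  intros m; simpl. rewrite Nat.add_comm, fs_add. lra.
Qed.

Lemma lim_le_bound u (l M : R) : is_lim_seq u l -> (forall n, u n <= M) -> l <= M.
Proof.
  intros H HM.
  assert (Q := is_lim_seq_le u (fun _ => M) l M HM H (is_lim_seq_const M)). exact Q.
Qed.

Lemma bound_le_lim u (l M : R) : is_lim_seq u l -> (forall n, M <= u n) -> M <= l.
Proof.
  intros H HM.
  assert (Q := is_lim_seq_le (fun _ => M) u M l HM (is_lim_seq_const M) H). exact Q.
Qed.

Lemma fs_le_series a l n : (forall k, 0 <= a k) -> is_series a l -> fs a n <= l.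
Proof.
  intros H0 H. apply is_series_fs in H. apply (is_lim_seq_incr_n _ n) in H.
  apply (bound_le_lim _ _ _ H). intros m. apply fs_mono; auto; lia.
Qed.

Lemma lim_fs (u : nat -> nat -> R) (l : nat -> R) J :
  (forall j, is_lim_seq (u j) (l j)) -> is_lim_seq (fun K => fs (fun j => u j K) J) (fs l J).
Proof.
  intros H; induction J; simpl.
  - apply is_lim_seq_const.
  - apply is_lim_seq_plus'; auto.
Qed.

Lemma diag_tonelli (h : nat -> nat -> R) :
  (forall j d, 0 <= h j d) -> (forall j, ex_series (h j)) ->
  ex_series (fun j => Series (h j)) ->
  is_series (fun i => fs (fun j => h j (i - j)%nat) (S i)) (Series (fun j => Series (h j))).
Proof.
  intros H0 Hin Hout.
  set (L := Series (fun j => Series (h j))).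
  set (d := fun i => fs (fun j => h j (i - j)%nat) (S i)).
  assert (Hd0 : forall i, 0 <= d i) by (intros; apply fs_nonneg; auto).
  assert (HS0 : forall j, 0 <= Series (h j)).
  { intros j. apply (fs_le_series (h j) _ 0); auto. apply Series_correct; auto. }
  assert (HP : forall I, fs d I = fs (fun j => fs (h j) (I - j)%nat) I).
  { induction I; [reflexivity|].
    change (fs d (S I)) with (fs d I + d I). rewrite IHI.
    rewrite (fs_ext (fun j => fs (h j) (S I - j)%nat) (fun j => fs (h j) (I - j)%nat + h j (I - j)%nat) (S I)).
    2:{ intros k Hk. replace (S I - k)%nat with (S (I - k)) by lia. reflexivity. }
    rewrite fs_plus. unfold d. change (fs (fun j => fs (h j) (I - j)%nat) (S I)) with
      (fs (fun j => fs (h j) (I - j)%nat) I + fs (h I) (I - I)%nat).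
    replace (I - I)%nat with O by lia. simpl (fs (h I) 0). lra. }
  assert (Hup : forall I, fs d I <= L).
  { intros I. rewrite HP. apply Rle_trans with (fs (fun j => Series (h j)) I).
    - apply fs_le. intros j. apply fs_le_series; auto. apply Series_correct; auto.
    - apply fs_le_series; auto. apply Series_correct; auto. }
  assert (Ex : ex_series d) by (apply (ex_series_bounded d L); auto).
  destruct Ex as [L' HL'].
  assert (HL'L : L' <= L).
  { apply is_series_fs in HL'. apply (lim_le_bound _ _ _ HL'); auto. }
  assert (HLL' : L <= L').
  { assert (HJ : forall J, fs (fun j => Series (h j)) J <= L').
    { intros J.
      assert (Hlim := lim_fs (fun j K => fs (h j) K) (fun j => Series (h j)) J).
      apply (lim_le_bound _ _ _ (Hlim ltac:(intros j; apply is_series_fs, Series_correct; auto))).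
      intros K. apply Rle_trans with (fs d (J + K)).
      - rewrite HP. apply Rle_trans with (fs (fun j => fs (h j) (J + K - j)%nat) J).
        + apply fs_le_lt. intros k Hk. apply fs_mono; auto; lia.
        + apply fs_mono; [intros; apply fs_nonneg; auto| lia].
      - apply is_series_fs in HL'. apply (fs_le_series d L' (J+K)); auto. apply is_series_fs; auto. }
    assert (HS := Series_correct _ Hout). apply is_series_fs in HS.
    apply (lim_le_bound _ _ _ HS). auto. }
  replace L with L' by lra. exact HL'.
Qed.

Definition o (i : nat) : R := 2 * INR i + 1.
Lemma o_ge1 i : 1 <= o i.
Proof. unfold o; assert (0 <= INR i) by apply pos_INR; lra. Qed.
Lemma o_pos i : 0 < o i.
Proof. generalize (o_ge1 i); lra. Qed.

Lemma inv_pow_pos x s : 0 < x -> 0 < / x ^ s.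
Proof. intros; apply Rinv_0_lt_compat, pow_lt; auto. Qed.

Definition lam (s : nat) : R := Series (fun i => / o i ^ s).

Lemma lambda_lam s : lambda_odd s = lam s.
Proof. apply Series_ext; intros n. unfold o. rewrite S_INR. f_equal. f_equal. lra. Qed.

Lemma tele_bound n : fs (fun i => 2 * (/ (INR i + 1) - / (INR i + 2))) n = 2 - 2 / (INR n + 1).
Proof.
  induction n; simpl fs. simpl. field.
  rewrite IHn. rewrite S_INR. field. split; generalize (pos_INR n); lra.
Qed.

Lemma ex_lam s : (2 <= s)%nat -> ex_series (fun i => / o i ^ s).
Proof.
  intros Hs. apply (ex_series_bounded _ 2).
  - intros; left; apply inv_pow_pos, o_pos.
  - intros n. apply Rle_trans with (fs (fun i => 2 * (/ (INR i + 1) - / (INR i + 2))) n).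
    + apply fs_le. intros i. generalize (pos_INR i); intros Hi.
      apply Rle_trans with (/ o i ^ 2).
      * apply Rinv_le_contravar. apply pow_lt, o_pos. apply Rle_pow; auto. apply o_ge1.
      * unfold o. replace (2 * (/ (INR i + 1) - / (INR i + 2))) with (/ ((INR i + 1) * (INR i + 2) / 2)) by (field; lra).
        apply Rinv_le_contravar. nra. simpl. nra.
    + rewrite tele_bound. assert (0 < 2 / (INR n + 1)). { generalize (pos_INR n); intro. apply Rdiv_lt_0_compat; lra. } lra.
Qed.

Lemma is_lam s : (2 <= s)%nat -> is_series (fun i => / o i ^ s) (lam s).
Proof. intros; apply Series_correct, ex_lam; auto. Qed.

Lemma ex_abs_lam s : (2 <= s)%nat -> ex_series (fun i => Rabs (/ o i ^ s)).
Proof. intros. eapply ex_series_ext; [|apply ex_lam; eauto]. intros n; simpl.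
  rewrite Rabs_pos_eq; auto. left; apply inv_pow_pos, o_pos. Qed.

Definition P (n t : nat) : R := fs (fun k => / o k ^ t) (S n).
Definition U (s t n : nat) : R := P n t / (INR n + 1) ^ s.

Lemma sigma_U s t : sigma_st s t = Series (U s t).
Proof.
  apply Series_ext; intros n. unfold S_odd, U, P. rewrite S_INR. f_equal.
  rewrite <- sum_n_m_S. change (sum_n_m (fun n0 : nat => / (2 * INR (S n0) - 1) ^ t) 0 n)
    with (sum_n (fun n0 : nat => / (2 * INR (S n0) - 1) ^ t) n).
  rewrite <- fs_sum_n. apply fs_ext. intros k _. unfold o; rewrite S_INR. f_equal. f_equal. lra.
Qed.

Lemma U_nonneg s t n : 0 <= U s t n.
Proof. unfold U, P. apply Rmult_le_pos. apply fs_nonneg. intros; left; apply inv_pow_pos, o_pos.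
  left. apply Rinv_0_lt_compat, pow_lt. generalize (pos_INR n); lra. Qed.
Lemma pf33 x y : 0 < x -> 0 < y -> /x^3 * /y^3 =
  (6 * / (x+y)^5 * / x^1 + 3 * / (x+y)^4 * / x^2 + 1 * / (x+y)^3 * / x^3) +
  (6 * / (x+y)^5 * / y^1 + 3 * / (x+y)^4 * / y^2 + 1 * / (x+y)^3 * / y^3).
Proof. intros. field. repeat split; lra. Qed.
Lemma pf24 x y : 0 < x -> 0 < y -> /x^2 * /y^4 =
  (4 * / (x+y)^5 * / x^1 + 1 * / (x+y)^4 * / x^2) +
  (4 * / (x+y)^5 * / y^1 + 3 * / (x+y)^4 * / y^2 + 2 * / (x+y)^3 * / y^3 + 1 * / (x+y)^2 * / y^4).
Proof. intros. field. repeat split; lra. Qed.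

Lemma o_sum n k : (k <= n)%nat -> o k + o (n - k) = 2 * (INR n + 1).
Proof. intros; unfold o; rewrite minus_INR by auto; lra. Qed.

Lemma c33_eq n : sum_f_R0 (fun k => / o k ^ 3 * / o (n - k) ^ 3) n =
  3/8 * U 5 1 n + 3/8 * U 4 2 n + 1/4 * U 3 3 n.
Proof.
  rewrite <- fs_sum_f_R0.
  set (N := 2 * (INR n + 1)).
  set (F := fun z => 6 * / N ^ 5 * / z ^ 1 + 3 * / N ^ 4 * / z ^ 2 + 1 * / N ^ 3 * / z ^ 3).
  rewrite (fs_ext _ (fun k => F (o k) + F (o (n - k)%nat))).
  2:{ intros k Hk. unfold F, N. rewrite <- (o_sum n k) by lia. apply pf33; apply o_pos. }
  rewrite fs_plus. rewrite (fs_rev (fun k => F (o (n - k)%nat))).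
  rewrite (fs_ext (fun j => F (o (n - (S n - S j))%nat)) (fun j => F (o j))).
  2:{ intros j Hj. do 2 f_equal. lia. }
  unfold F. rewrite !fs_plus, !fs_scal. unfold U, P. unfold N. field.
  generalize (pos_INR n); lra.
Qed.

Lemma c24_eq n : sum_f_R0 (fun k => / o k ^ 2 * / o (n - k) ^ 4) n =
  1/4 * U 5 1 n + 1/4 * U 4 2 n + 1/4 * U 3 3 n + 1/4 * U 2 4 n.
Proof.
  rewrite <- fs_sum_f_R0.
  set (N := 2 * (INR n + 1)).
  set (F := fun z => 4 * / N ^ 5 * / z ^ 1 + 1 * / N ^ 4 * / z ^ 2).
  set (G := fun z => 4 * / N ^ 5 * / z ^ 1 + 3 * / N ^ 4 * / z ^ 2 + 2 * / N ^ 3 * / z ^ 3 + 1 * / N ^ 2 * / z ^ 4).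
  rewrite (fs_ext _ (fun k => F (o k) + G (o (n - k)%nat))).
  2:{ intros k Hk. unfold F, G, N. rewrite <- (o_sum n k) by lia. apply pf24; apply o_pos. }
  rewrite fs_plus. rewrite (fs_rev (fun k => G (o (n - k)%nat))).
  rewrite (fs_ext (fun j => G (o (n - (S n - S j))%nat)) (fun j => G (o j))).
  2:{ intros j Hj. do 2 f_equal. lia. }
  unfold F, G. rewrite !fs_plus, !fs_scal. unfold U, P. unfold N. field.
  generalize (pos_INR n); lra.
Qed.


Lemma is_cauchy a b : (2 <= a)%nat -> (2 <= b)%nat ->
  is_series (fun n => sum_f_R0 (fun k => / o k ^ a * / o (n - k) ^ b) n) (lam a * lam b).
Proof. intros. apply (is_series_mult (fun k => / o k ^ a) (fun k => / o k ^ b)); try apply is_lam; try apply ex_abs_lam; auto. Qed.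

Lemma ex_U s t : (s = 5 /\ t = 1 \/ s = 4 /\ t = 2 \/ s = 3 /\ t = 3 \/ s = 2 /\ t = 4)%nat ->
  ex_series (U s t).
Proof.
  intros Hst.
  assert (H := is_cauchy 2 4 ltac:(lia) ltac:(lia)).
  eapply is_series_ext in H; [|intros n; apply c24_eq].
  apply (@ex_series_le R_AbsRing R_CompleteNormedModule (U s t) (fun n => 4 * (1/4 * U 5 1 n + 1/4 * U 4 2 n + 1/4 * U 3 3 n + 1/4 * U 2 4 n))).
  - intros n. change (norm (U s t n)) with (Rabs (U s t n)). rewrite Rabs_pos_eq by apply U_nonneg.
    generalize (U_nonneg 5 1 n) (U_nonneg 4 2 n) (U_nonneg 3 3 n) (U_nonneg 2 4 n).
    destruct Hst as [[-> ->]|[[-> ->]|[[-> ->]|[-> ->]]]]; intros; lra.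
  - exists (4 * (lam 2 * lam 4)). apply (is_series_scal_l 4) in H. exact H.
Qed.

Lemma ex_scal c (f : nat -> R) : ex_series f -> ex_series (fun n => c * f n).
Proof. intros [l H]. exists (c * l). apply (is_series_scal_l c) in H. exact H. Qed.

Lemma ex_plus (f g : nat -> R) : ex_series f -> ex_series g -> ex_series (fun n => f n + g n).
Proof. intros [l H] [l' H']. exists (l + l'). apply (is_series_plus _ _ _ _ H H'). Qed.

Definition Hn (K : nat) : R := fs (fun k => / (INR k + 1)) K.

Lemma H_le K : Hn K <= INR K.
Proof.
  induction K; unfold Hn in *; simpl fs. simpl; lra.
  rewrite S_INR. assert (/ (INR K + 1) <= 1).
  { rewrite <- Rinv_1. apply Rinv_le_contravar; [lra|]. generalize (pos_INR K); lra. }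
  lra.
Qed.

Lemma H_nonneg K : 0 <= Hn K.
Proof. apply fs_nonneg. intros; left; apply Rinv_0_lt_compat; generalize (pos_INR k); lra. Qed.

Lemma lim_inv_n : is_lim_seq (fun N => / (INR N + 1)) 0.
Proof.
  assert (Hl : is_lim_seq (fun N => INR N + 1) p_infty).
  { assert (Q := is_lim_seq_INR). apply is_lim_seq_incr_1 in Q. eapply is_lim_seq_ext; [|exact Q].
    intros n; cbv beta; apply S_INR. }
  apply is_lim_seq_inv in Hl; [|discriminate]. exact Hl.
Qed.

Lemma tail_bound N K : fs (fun j => / (INR (N + j) + 1)) K <= INR K * / (INR N + 1).
Proof.
  induction K; simpl fs. simpl; lra.
  rewrite S_INR. assert (/ (INR (N + K) + 1) <= / (INR N + 1)).
  { apply Rinv_le_contravar. generalize (pos_INR N); lra. rewrite plus_INR. generalize (pos_INR K); lra. }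
  lra.
Qed.

Lemma tele K : is_series (fun d => / (INR d + 1) - / (INR d + 1 + INR K)) (Hn K).
Proof.
  apply is_series_fs.
  assert (E : forall N, fs (fun d => / (INR d + 1) - / (INR d + 1 + INR K)) N =
     Hn K - fs (fun j => / (INR (N + j) + 1)) K).
  { intros N.
    assert (E1 := fs_add (fun k => / (INR k + 1)) K N).
    assert (E2 := fs_add (fun k => / (INR k + 1)) N K).
    rewrite Nat.add_comm in E2. fold (Hn (K + N)) in E1, E2. fold (Hn K) in E1. fold (Hn N) in E2.
    replace (fs (fun d => / (INR d + 1) - / (INR d + 1 + INR K)) N) with
      (Hn N + (-1) * fs (fun j => / (INR (K + j) + 1)) N).
    2:{ rewrite <- fs_scal. unfold Hn. rewrite <- fs_plus. apply fs_ext. intros k _.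
        rewrite plus_INR. replace (INR k + 1 + INR K) with (INR K + INR k + 1) by lra. lra. }
    lra. }
  eapply is_lim_seq_ext; [intros N; symmetry; apply E|].
  cut (is_lim_seq (fun N => Hn K - fs (fun j => / (INR (N + j) + 1)) K) (Hn K - 0)).
  { intros Q. replace (Hn K - 0) with (Hn K) in Q by ring. exact Q. }
  apply is_lim_seq_minus'; [apply is_lim_seq_const|].
  apply is_lim_seq_le_le with (u := fun _ => 0) (w := fun N => INR K * / (INR N + 1)).
  - intros N; split; [apply fs_nonneg; intros; left; apply Rinv_0_lt_compat; generalize (pos_INR (N+k)); lra|apply tail_bound].
  - apply is_lim_seq_const.
  - replace (Finite 0) with (Rbar_mult (INR K) 0) by (simpl; f_equal; ring).
    apply is_lim_seq_scal_l, lim_inv_n.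
Qed.

Definition Dd p q := o q ^ 2 - o p ^ 2.
Definition Kp i d := / (o i ^ 4 * Dd i (S i + d)).
Definition Km i d := / (o (S i + d) ^ 4 * Dd i (S i + d)).
Definition Ep i := Hn (S (i + i)) / (4 * o i ^ 5).
Definition Em p := fs (fun j => / (o p ^ 4 * Dd j p)) p.

Lemma INR_oS i : INR (S (i + i)) = o i.
Proof. unfold o. rewrite S_INR, plus_INR. lra. Qed.

Lemma oSd i d : o (S i + d) = o i + 2 * (INR d + 1).
Proof. unfold o. rewrite plus_INR, S_INR. lra. Qed.

Lemma is_scal c (a : nat -> R) l : is_series a l -> is_series (fun n => c * a n) (c * l).
Proof. intros Q. apply (is_series_scal_l c) in Q. exact Q. Qed.

Lemma Kp_series i : is_series (Kp i) (Ep i).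
Proof.
  assert (T := is_scal (/ (4 * o i ^ 5)) _ _ (tele (S (i + i)))).
  unfold Ep. replace (Hn (S (i + i)) / (4 * o i ^ 5)) with (/ (4 * o i ^ 5) * Hn (S (i + i))) by (unfold Rdiv; ring). refine (is_series_ext _ _ _ _ T).
  intros d. cbv beta. unfold Kp, Dd. rewrite oSd, INR_oS.
  assert (0 < o i) by apply o_pos. assert (0 <= INR d) by apply pos_INR.
  match goal with |- ?a = ?b => change (@eq R a b) end. field. repeat split; try lra. nra.
Qed.

Lemma fs_inv_sub p : fs (fun j => / (INR p - INR j)) p = Hn p.
Proof.
  rewrite fs_rev. unfold Hn. apply fs_ext. intros k Hk. rewrite minus_INR by lia. rewrite S_INR. f_equal. lra.
Qed.

Lemma fs_inv_add p : fs (fun j => / (INR p + INR j + 1)) p = Hn (p + p) - Hn p.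
Proof.
  unfold Hn. rewrite fs_add. rewrite (fs_ext (fun j => / (INR (p + j) + 1)) (fun j => / (INR p + INR j + 1))).
  lra. intros; rewrite plus_INR; auto.
Qed.

Lemma Em_eq p : Em p = Hn (p + p) / (4 * o p ^ 5).
Proof.
  unfold Em.
  rewrite (fs_ext _ (fun j => / (4 * o p ^ 5) * (/ (INR p - INR j) + / (INR p + INR j + 1)))).
  - rewrite fs_scal, fs_plus, fs_inv_sub, fs_inv_add. field. generalize (o_pos p); lra.
  - intros j Hj. unfold Dd, o. apply lt_INR in Hj. generalize (pos_INR j); intros.
    field. repeat split; nra.
Qed.

Lemma Ep_Em p : Ep p - Em p = / 4 * / o p ^ 6.
Proof.
  rewrite Em_eq. unfold Ep, Hn. simpl fs. rewrite plus_INR. unfold o. generalize (pos_INR p); intros.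
  field. lra.
Qed.

Lemma is_plus (a b : nat -> R) la lb : is_series a la -> is_series b lb -> is_series (fun n => a n + b n) (la + lb).
Proof. intros Qa Qb. exact (is_series_plus _ _ _ _ Qa Qb). Qed.

Lemma is_minus (a b : nat -> R) la lb : is_series a la -> is_series b lb -> is_series (fun n => a n - b n) (la - lb).
Proof. intros Qa Qb. exact (is_series_minus _ _ _ _ Qa Qb). Qed.

Lemma is_ext (a b : nat -> R) l : (forall n, a n = b n) -> is_series a l -> is_series b l.
Proof. intros E Q. exact (is_series_ext _ _ _ E Q). Qed.

Lemma is_shift0 (a : nat -> R) l : a O = 0 -> is_series (fun i => a (S i)) l -> is_series a l.
Proof.
  intros H0 Q. apply is_series_fs in Q. apply is_series_fs. apply is_lim_seq_incr_1.
  eapply is_lim_seq_ext; [|exact Q]. intros n. cbv beta. rewrite fs_front, H0. lra.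
Qed.

Lemma ex_le_nonneg (a b : nat -> R) : (forall n, 0 <= a n <= b n) -> ex_series b -> ex_series a.
Proof.
  intros Hab Hb. apply (@ex_series_le R_AbsRing R_CompleteNormedModule a b); auto.
  intros n. change (norm (a n)) with (Rabs (a n)). rewrite Rabs_pos_eq; apply Hab.
Qed.

Definition g i j := / o i ^ 2 * / o j ^ 4.
Definition Asw j d := g (S j + d) j.
Definition Ct i d := g i (S i + d).
Definition Afin i := fs (g i) i.
Definition SA j := / o j ^ 4 * (lam 2 - fs (fun k => / o k ^ 2) (S j)).

Lemma g_pos i j : 0 < g i j.
Proof. unfold g; apply Rmult_lt_0_compat; apply inv_pow_pos, o_pos. Qed.

Lemma is_g i : is_series (g i) (/ o i ^ 2 * lam 4).
Proof. apply is_scal, is_lam; lia. Qed.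

Lemma is_Asw j : is_series (Asw j) (SA j).
Proof.
  assert (T := is_series_tail _ _ (S j) (is_lam 2 ltac:(lia))).
  apply (is_scal (/ o j ^ 4)) in T. unfold SA. refine (is_ext _ _ _ _ T).
  intros d; unfold Asw, g; ring.
Qed.

Lemma SA_bounds j : 0 <= SA j <= lam 2 * / o j ^ 4.
Proof.
  unfold SA. assert (0 < / o j ^ 4) by (apply inv_pow_pos, o_pos).
  assert (fs (fun k => / o k ^ 2) (S j) <= lam 2).
  { apply fs_le_series. intros; left; apply inv_pow_pos, o_pos. apply is_lam; lia. }
  assert (0 <= fs (fun k => / o k ^ 2) (S j)).
  { apply fs_nonneg. intros; left; apply inv_pow_pos, o_pos. }
  split; nra.
Qed.

Lemma ex_SA : ex_series SA.
Proof.
  apply (ex_le_nonneg _ (fun j => lam 2 * / o j ^ 4)); [apply SA_bounds|].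
  apply ex_scal, ex_lam; lia.
Qed.

Lemma is_Afin : is_series Afin (Series SA).
Proof.
  assert (T := diag_tonelli Asw ltac:(intros; left; apply g_pos)
      ltac:(intros j; exists (SA j); apply is_Asw)
      ltac:(eapply ex_series_ext; [|exact ex_SA]; intros j; symmetry; apply is_series_unique, is_Asw)).
  rewrite (Series_ext _ SA) in T by (intros j; apply is_series_unique, is_Asw).
  apply is_shift0; [reflexivity|]. refine (is_ext _ _ _ _ T).
  intros i. unfold Afin, Asw. apply fs_ext. intros j Hj. f_equal. lia.
Qed.

Definition SCt i := / o i ^ 2 * lam 4 - Afin i - / o i ^ 6.

Lemma is_Ct i : is_series (Ct i) (SCt i).
Proof.
  assert (T := is_series_tail _ _ (S i) (is_g i)). unfold SCt.
  replace (/ o i ^ 2 * lam 4 - Afin i - / o i ^ 6) with (/ o i ^ 2 * lam 4 - fs (g i) (S i)).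
  exact T.
  simpl fs. unfold Afin, g. assert (0 < o i) by apply o_pos. field. lra.
Qed.

Lemma is_lam2_lam4 : is_series (fun i => / o i ^ 2 * lam 4) (lam 2 * lam 4).
Proof.
  assert (T := is_scal (lam 4) _ _ (is_lam 2 ltac:(lia))).
  replace (lam 2 * lam 4) with (lam 4 * lam 2) by ring.
  refine (is_ext _ _ _ _ T). intros; ring.
Qed.

Lemma is_SCt : is_series SCt (lam 2 * lam 4 - Series SA - lam 6).
Proof.
  apply is_minus; [apply is_minus|]; [apply is_lam2_lam4|apply is_Afin|].
  refine (is_ext _ _ _ _ (is_lam 6 ltac:(lia))). reflexivity.
Qed.

Lemma Dd_pos i d : 0 < Dd i (S i + d).
Proof. unfold Dd. rewrite oSd. assert (0 < o i) by apply o_pos. generalize (pos_INR d); intros. nra. Qed.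

Lemma pw i d : Asw i d + Ct i d = Kp i d - Km i d.
Proof.
  unfold Asw, Ct, Kp, Km, g. assert (Q := Dd_pos i d). unfold Dd in *. rewrite oSd in *.
  assert (0 < o i) by apply o_pos. generalize (pos_INR d); intros.
  field. repeat split; try nra.
Qed.

Lemma is_Km i : is_series (Km i) (Ep i - SA i - SCt i).
Proof.
  assert (T := is_minus _ _ _ _ (Kp_series i) (is_plus _ _ _ _ (is_Asw i) (is_Ct i))).
  replace (Ep i - SA i - SCt i) with (Ep i - (SA i + SCt i)) by ring.
  refine (is_ext _ _ _ _ T). intros d. cbv beta. rewrite pw. ring.
Qed.

Lemma Ep_bounds i : 0 <= Ep i <= / 4 * / o i ^ 4.
Proof.
  unfold Ep. assert (Q := H_le (S (i + i))). rewrite INR_oS in Q.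
  assert (Q2 := H_nonneg (S (i + i))). assert (0 < o i) by apply o_pos.
  split. apply Rmult_le_pos; auto. left; apply Rinv_0_lt_compat; apply Rmult_lt_0_compat; [lra|apply pow_lt; lra].
  apply Rle_trans with (o i / (4 * o i ^ 5)).
  - apply Rmult_le_compat_r; auto. left; apply Rinv_0_lt_compat; apply Rmult_lt_0_compat; [lra|apply pow_lt; lra].
  - right. field. lra.
Qed.

Lemma ex_Ep : ex_series Ep.
Proof. apply (ex_le_nonneg _ (fun i => / 4 * / o i ^ 4)); [apply Ep_bounds|apply ex_scal, ex_lam; lia]. Qed.

Lemma ex_minus' (f g : nat -> R) : ex_series f -> ex_series g -> ex_series (fun n => f n - g n).
Proof. intros [l Q] [l' Q']. exists (l - l'). apply is_minus; auto. Qed.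

Lemma is_Em : is_series Em (Series (fun j => Ep j - SA j - SCt j)).
Proof.
  assert (T := diag_tonelli Km ltac:(intros; left; apply Rinv_0_lt_compat, Rmult_lt_0_compat; [apply pow_lt, o_pos|apply Dd_pos])
      ltac:(intros j; eexists; apply is_Km)
      ltac:(eapply ex_series_ext; [|apply ex_minus'; [apply ex_minus'; [exact ex_Ep|exact ex_SA]|exists (lam 2 * lam 4 - Series SA - lam 6); exact is_SCt]];
            intros j; symmetry; apply is_series_unique, is_Km)).
  rewrite (Series_ext _ (fun j => Ep j - SA j - SCt j)) in T by (intros j; apply is_series_unique, is_Km).
  apply is_shift0; [reflexivity|]. refine (is_ext _ _ _ _ T).
  intros i. unfold Em, Km. apply fs_ext. intros j Hj.
  replace (S j + (i - j))%nat with (S i) by lia. reflexivity.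
Qed.

Lemma lam24' : lam 2 * lam 4 = 5/4 * lam 6.
Proof.
  assert (T := is_minus _ _ _ _ (Series_correct _ ex_Ep) is_Em).
  assert (T2 := is_scal (/4) _ _ (is_lam 6 ltac:(lia))).
  assert (E : forall p, Ep p - Em p = / 4 * / o p ^ 6) by apply Ep_Em.
  apply (is_ext _ _ _ E) in T.
  apply is_series_unique in T. apply is_series_unique in T2. rewrite T2 in T.
  rewrite Series_minus in T; [|apply ex_minus'; [exact ex_Ep|exact ex_SA]|exists (lam 2 * lam 4 - Series SA - lam 6); exact is_SCt].
  rewrite Series_minus in T; [|exact ex_Ep|exact ex_SA].
  rewrite (is_series_unique _ _ is_SCt) in T. lra.
Qed.

Theorem mainTheorem19 :
  sigma_st 3 3 + 3 * sigma_st 2 4 = 15 * lambda_odd 6 - 8 * (lambda_odd 3) ^ 2.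
Proof.
  rewrite !sigma_U, !lambda_lam.
  assert (E51 := ex_U 5 1 ltac:(lia)). assert (E42 := ex_U 4 2 ltac:(lia)).
  assert (E33 := ex_U 3 3 ltac:(lia)). assert (E24 := ex_U 2 4 ltac:(lia)).
  assert (H33 := is_cauchy 3 3 ltac:(lia) ltac:(lia)).
  eapply is_series_ext in H33; [|intros n; apply c33_eq].
  assert (H24 := is_cauchy 2 4 ltac:(lia) ltac:(lia)).
  eapply is_series_ext in H24; [|intros n; apply c24_eq].
  apply is_series_unique in H33. apply is_series_unique in H24.
  assert (EX : forall b c : R, forall f g : nat -> R, ex_series f -> ex_series g ->
     ex_series (fun n => b * f n + c * g n)).
  { intros b c f g Hf Hg. apply (ex_plus (fun n => b * f n) (fun n => c * g n));
    apply ex_scal; auto. }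
  rewrite Series_plus in H33; [|apply EX; auto|apply ex_scal; auto].
  rewrite Series_plus in H33; [|apply ex_scal; auto|apply ex_scal; auto].
  rewrite !Series_scal_l in H33.
  rewrite Series_plus in H24.
  2:{ apply (ex_plus (fun n => 1/4 * U 5 1 n + 1/4 * U 4 2 n)); [apply EX|apply ex_scal]; auto. }
  2:{ apply ex_scal; auto. }
  rewrite Series_plus in H24; [|apply EX; auto|apply ex_scal; auto].
  rewrite Series_plus in H24; [|apply ex_scal; auto|apply ex_scal; auto].
  rewrite !Series_scal_l in H24.
  rewrite lam24' in H24. simpl. lra.
Qed.
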